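(* Let $n\ge2$ and $\omega\in\{0,1\}^n$ with $\omega_1=0$ and $\omega_n=1$. For $0\le k\le n$ let $S_k=\sum_{i=1}^k(1-2\omega_i)$ (so $S_0=0$). Then the stabilization time $T(\omega)$ of $\omega$ satisfies $$T(\omega)=\frac n2+\max_{1\le k\le n}S_k-\frac{S_n}{2}-1.$$
   Context: One step of the evolution on $\{0,1\}^n$ replaces simultaneously every occurrence of the consecutive substring ''01'' by ''10'' (for every $i$ with $\omega_i=0,\omega_{i+1}=1$ these two bits are swapped). Iterating, one reaches a string of the form $1\cdots10\cdots0$, called stabilized. The stabilization time $T(\omega)$ is the number of steps needed to reach a stabilized string from $\omega$ ($0$ if $\omega$ is already stabilized). *)

(* Defs.v *)
(* Binary strings omega in {0,1}^n are represented as
   w : seq bool with size w = n; omega_i (1-based) is nth false w (i-1),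
   true = 1, false = 0. *)
From HB Require Import structures.
From mathcomp Require Import all_boot all_order all_algebra.
Set Implicit Arguments. Unset Strict Implicit. Unset Printing Implicit Defensive.
Import Order.TTheory GRing.Theory Num.Theory.

(* One step of the evolution: every occurrence of "01" is replaced by "10",
   simultaneously (occurrences of "01" never overlap). *)
Fixpoint step (w : seq bool) : seq bool :=
  match w with
  | false :: true :: s => true :: false :: step s
  | b :: s => b :: step s
  | [::] => [::]
  end.

Definition stabilized (w : seq bool) : Prop :=
  exists a b : nat, w = nseq a true ++ nseq b false.

Definition is_stab_time (w : seq bool) (t : nat) : Prop :=
  stabilized (iter t step w) /\ (forall k, k < t -> ~ stabilized (iter k step w)).

Definition S (w : seq bool) (k : nat) : int :=
  (\sum_(i < k) (1 - 2 * (nth false w i : nat)%:Z))%R.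

Definition maxS (w : seq bool) (n : nat) : int :=
  \big[Num.max/S w 1]_(1 <= k < n.+1) S w k.

(* Main.v *)
Require Import Defs.
From HB Require Import structures.
From mathcomp Require Import all_boot all_order all_algebra.
From mathcomp Require Import zify ring lra.
Import Order.TTheory GRing.Theory Num.Theory.

Definition cnt (u : seq bool) k := count id (take k u).

Arguments cnt : simpl never.
Lemma cntS (x : bool) s k : cnt (x :: s) k.+1 = x + cnt s k.
Proof. by rewrite /cnt. Qed.
Lemma cnt0 u : cnt u 0 = 0.
Proof. by rewrite /cnt take0. Qed.

Lemma step_ft s : step [:: false, true & s] = [:: true, false & step s].
Proof. by []. Qed.
Lemma step_t s : step (true :: s) = true :: step s.
Proof. by []. Qed.
Lemma step_ff s : step [:: false, false & s] = false :: step (false :: s).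
Proof. by []. Qed.
Lemma step_f1 : step [:: false] = [:: false].
Proof. by []. Qed.
Lemma step_nil : step [::] = [::].
Proof. by []. Qed.
Arguments step : simpl never.
Definition stepE := (step_ft, step_t, step_ff, step_f1, step_nil).

Lemma step_size u : size (step u) = size u.
Proof.
have [m] := ubnP (size u); elim: m u => // m IH [|[] [|[] s]] /= Hs; rewrite ?stepE //=;
  try (rewrite IH /=; lia).
Qed.

Lemma step_count u : count id (step u) = count id u.
Proof.
have [m] := ubnP (size u); elim: m u => // m IH [|[] [|[] s]] /= Hs; rewrite ?stepE //=;
  try (rewrite IH /=; lia).
Qed.

Lemma cnt_step u k : 0 < k < size u ->
  cnt (step u) k = minn (cnt u k.+1) (cnt u k.-1).+1.
Proof.
have [m] := ubnP (size u); elim: m u k => // m IH [|[] [|[] s]] k /= Hs Hk; rewrite ?stepE /=.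
all: move: Hk; case: k => [|[|[|k]]] Hk; simpl in Hk; rewrite ?cnt0 ?cntS ?cnt0;
  try (rewrite IH; [|simpl;lia|simpl;lia]); rewrite /= ?cnt0 ?cntS ?cnt0 /=; try lia.
Qed.

Lemma cnt_le u k : cnt u k <= k.
Proof.
rewrite /cnt; apply: leq_trans (count_size _ _) _; rewrite size_take.
by case: ifP => // /negbT; rewrite -leqNgt.
Qed.

Lemma cnt_mono u i k : i <= k -> cnt u i <= cnt u k <= cnt u i + (k - i).
Proof.
move=> ik; rewrite /cnt -(subnKC ik) takeD count_cat.
have := cnt_le (drop i u) (k - i); rewrite /cnt (subnKC ik); lia.
Qed.

Lemma cnt_size u : cnt u (size u) = count id u.
Proof. by rewrite /cnt take_size. Qed.

Lemma iter_size t u : size (iter t step u) = size u.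
Proof. by elim: t => //= t IH; rewrite step_size. Qed.

Lemma iter_count t u : count id (iter t step u) = count id u.
Proof. by elim: t => //= t IH; rewrite step_count. Qed.

Lemma step_stab x y : step (nseq x true ++ nseq y false) = nseq x true ++ nseq y false.
Proof.
elim: x => [|x IH] /=; last by rewrite step_t IH.
elim: y => [|[|y] IH] //=.
by rewrite step_ff IH.
Qed.

Lemma cnt_stab u : stabilized u -> cnt u (count id u) = count id u.
Proof.
case=> x [y ->]; rewrite count_cat !count_nseq /= mul0n mul1n addn0.
by rewrite /cnt take_size_cat ?size_nseq // count_nseq mul1n.
Qed.

Lemma stab_cnt u : count id u <= cnt u (count id u) -> stabilized u.
Proof.
set a := count id u => H.
have aS : a <= size u by apply: count_size.
have Ht : cnt u a = a by have := cnt_le u a; lia.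
exists a, (size (drop a u)).
rewrite -{1}(cat_take_drop a u); congr (_ ++ _).
  have sz : size (take a u) = a by rewrite size_take; case: ltngtP aS => //; lia.
  have : all (pred1 true) (take a u).
    rewrite all_count sz; apply/eqP; rewrite -{2}Ht /cnt; apply: eq_count => b.
    by case: b.
  by move/all_pred1P; rewrite sz.
have : all (pred1 false) (drop a u).
  rewrite all_count; apply/eqP.
  have : count id u = cnt u a + count id (drop a u).
    by rewrite /cnt -count_cat cat_take_drop.
  rewrite Ht -/a => E.
  have E0 : count id (drop a u) = 0 by lia.
  rewrite -(count_predC id) E0 add0n; apply: eq_count => b; by case: b.
by move/all_pred1P.
Qed.


Section Bounds.
Variable u : seq bool.
Local Notation n := (size u).
Local Notation a := (count id u).
Definition Nt t k := cnt (iter t step u) k.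

Lemma Nt_step t k : 0 < k < n -> Nt t.+1 k = minn (Nt t k.+1) (Nt t k.-1).+1.
Proof. by move=> Hk; rewrite /Nt /= cnt_step // iter_size. Qed.

Lemma Nt_0 t : Nt t 0 = 0.
Proof. exact: cnt0. Qed.

Lemma Nt_n t : Nt t n = a.
Proof. by rewrite /Nt -(iter_size t u) cnt_size iter_count. Qed.

Lemma Nt_ub t k : Nt t k <= k.
Proof. exact: cnt_le. Qed.

Lemma UB Mn : (forall k, k <= n -> k <= Mn + 2 * cnt u k) ->
  forall t k, k <= n -> k <= Nt t k \/ a <= Nt t k \/ k + t <= Mn + 2 * Nt t k.
Proof.
move=> H0; elim=> [|t IH] k Hk.
  by right; right; rewrite addn0; apply: H0.
case: k Hk => [|k] Hk; first by left.
have [->|Hkn] := eqVneq k.+1 n; first by right; left; rewrite Nt_n.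
rewrite Nt_step; last by lia.
have := IH k.+2 ltac:(lia); have := IH k ltac:(lia); simpl; lia.
Qed.

Lemma LB t k j : k <= n -> j <= n -> j <= k + t -> k <= j + t ->
  (exists d, j + k + t = 2 * d) -> 2 * Nt t k + j <= k + t + 2 * cnt u j.
Proof.
elim: t k j => [|t IH] k j Hk Hj H1 H2 Hd.
  have -> : j = k by lia.
  rewrite /Nt /=; lia.
case: k Hk H1 H2 Hd => [|k] Hk H1 H2 Hd.
  rewrite Nt_0; have := @cnt_mono u 0 j (leq0n j); rewrite cnt0; lia.
have [Ekn|Hkn] := eqVneq k.+1 n.
  rewrite Ekn Nt_n; have := @cnt_mono u j n Hj; rewrite cnt_size; lia.
rewrite Nt_step; last by lia.
case: Hd => d Hd.
have [Hjk|Hjk] := leqP j k.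
  case: (eqVneq j k.+1) => [Ej|Nj]; first by lia.
  have := IH k j ltac:(lia) Hj ltac:(lia) ltac:(lia) ltac:(exists d.-1; lia).
  simpl; lia.
- have [Hjk'|Hjk'] := eqVneq j k.+1.
  + case: t IH Hd H1 H2 => [|t] IH Hd H1 H2; first by lia.
    have := IH k.+2 j ltac:(lia) Hj ltac:(lia) ltac:(lia) ltac:(exists d; lia).
    lia.
  + have := IH k.+2 j ltac:(lia) Hj ltac:(lia) ltac:(lia) ltac:(exists d; lia).
    lia.
Qed.
End Bounds.


Lemma cntSr (w : seq bool) k : cnt w k.+1 = cnt w k + nth false w k.
Proof.
elim: w k => [|x s IH] [|k]; rewrite /cnt /= ?take0 //=.
- by rewrite addn0.
- by move: (IH k); rewrite /cnt => ->; rewrite addnA.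
Qed.

Lemma S_cnt w k : S w k = (k%:Z - 2 * (cnt w k)%:Z)%R.
Proof.
elim: k => [|k IH]; first by rewrite /S big_ord0 cnt0.
rewrite /S big_ord_recr /= -/(S w k) IH cntSr.
rewrite !PoszD.
case: (nth false w k) => /=; lia.
Qed.

Lemma maxS_gen w d lo :
  (forall k, lo <= k < lo + d -> (S w k <= \big[Num.max/S w 1]_(lo <= k < lo + d) S w k)%R) /\
  exists k, (k = 1 \/ lo <= k < lo + d) /\ \big[Num.max/S w 1]_(lo <= k < lo + d) S w k = S w k.
Proof.
elim: d lo => [|d IH] lo.
  split; first by move=> k; lia.
  by exists 1; rewrite big_geq; [split; [left|]|lia].
have [IH1 [j [Hj IH2]]] := IH lo.+1.
rewrite big_ltn; last by lia.
rewrite -addSnnS maxEle.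
case: ifP => Hle; split.
- move=> k Hk; case: (eqVneq k lo) => [->//|Nk].
  apply: IH1; lia.
- by exists j; split => //; lia.
- move=> k Hk; case: (eqVneq k lo) => [->|Nk]; first by [].
  apply: le_trans (IH1 k _) _; first by lia.
  by apply: ltW; rewrite ltNge Hle.
- by exists lo; split => //; lia.
Qed.

Lemma maxS_prop w n : 1 <= n ->
  (forall k, 1 <= k <= n -> (S w k <= maxS w n)%R) /\
  exists k, 1 <= k <= n /\ maxS w n = S w k.
Proof.
move=> Hn; have [H1 [j [Hj H2]]] := maxS_gen w n 1.
rewrite /maxS; split.
  by move=> k Hk; apply: H1; lia.
by exists j; split => //; lia.
Qed.


Lemma iter_fix v m : step v = v -> iter m step v = v.
Proof. by move=> H; elim: m => //= m ->. Qed.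

Theorem lemma1p2 (n : nat) (w : seq bool) :
  2 <= n -> size w = n -> nth false w 0 = false -> nth false w n.-1 = true ->
  exists t : nat, is_stab_time w t /\
    (t%:R = (n%:R / 2 + (maxS w n)%:~R - (S w n)%:~R / 2 - 1 : rat))%R.
Proof.
move=> Hn Hs H0 Hl.
set a := count id w.
have Ha : cnt w n = a by rewrite -Hs cnt_size.
have Hn1 : cnt w n = cnt w n.-1 + 1.
  by rewrite -{1}(ltn_predK Hn) cntSr Hl.
have Hc1 : cnt w 1 = 0 by rewrite (cntSr w 0) cnt0 H0.
have [Hmax [j [Hj Hmj]]] := maxS_prop w n (ltnW Hn).
have HS1 := Hmax 1 ltac:(lia).
rewrite S_cnt Hc1 in HS1.
rewrite Hmj S_cnt in HS1.
set c := cnt w j in HS1.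
have Hcm := @cnt_mono w 0 j (leq0n j). rewrite cnt0 in Hcm.
set Mn := j - 2 * c.
have HMn : 1 <= Mn /\ j = Mn + 2 * c by lia.
have HUB0 : forall k, k <= n -> k <= Mn + 2 * cnt w k.
  move=> [|k] Hk; first by [].
  have := Hmax k.+1 ltac:(lia); rewrite Hmj !S_cnt -/c; lia.
have Hjn : j < n.
  case: (ltngtP j n) => // Ejn; first by lia.
  have := Hmax n.-1 ltac:(lia); rewrite Hmj !S_cnt -/c.
  have -> : (Posz n.-1 = Posz n - 1)%R by lia.
  rewrite -Ejn in Hn1 *; rewrite -/c in Hn1; lia.
have Hcj : c + 1 <= a.
  have Hj1 : j <= n.-1 by lia.
  have := @cnt_mono w j n.-1 Hj1; lia.
have Han : a <= n by rewrite -Ha; apply: cnt_le.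
have Ha1 : 1 <= a by lia.
set T := a + Mn - 1.
have HUB0' : forall k, k <= size w -> k <= Mn + 2 * cnt w k by rewrite Hs.
exists T; split; first split.
- apply: stab_cnt; rewrite iter_count -/a.
  have := @UB w Mn HUB0' T a ltac:(lia); rewrite /Nt; lia.
- move=> k Hk Hst.
  have Hfix : step (iter k step w) = iter k step w.
    by case: Hst => x [y ->]; rewrite step_stab.
  have Hit : iter (T - 1) step w = iter k step w.
    have HkT : k <= T - 1 by lia.
    by rewrite -(subnK HkT) iterD iter_fix.
  have := cnt_stab _ Hst; rewrite iter_count -/a -Hit => E.
  have := @LB w (T - 1) a j ltac:(lia) ltac:(lia) ltac:(lia) ltac:(lia)
    ltac:(exists (Mn + c + a - 1); lia).
  rewrite /Nt E -/c; lia.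
- have EM : maxS w n = Posz Mn by rewrite Hmj S_cnt -/c; lia.
  have ES : S w n = (Posz n - 2 * Posz a)%R by rewrite S_cnt Ha.
  rewrite EM ES intrB intrM -!pmulrn.
  have ET : (T%:R : rat) = (a%:R + Mn%:R - 1)%R.
    have ET' : T.+1 = a + Mn by rewrite /T; lia.
    have : ((T.+1)%:R = (a + Mn)%:R :> rat)%R by rewrite ET'.
    rewrite -natr1 natrD; lra.
  rewrite ET; lra.
Qed.
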